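(* Assume $f$ has a unique global maximizer, contains no weak epistasis, and every order-1 epistasis of $f$ is strict. Then every directed cycle of the epistatic graph lies in a clique: if $v_0\rightarrow v_1\rightarrow\cdots\rightarrow v_{c-1}\rightarrow v_0$ is a directed cycle, then $v_a\rightarrow v_b$ for all distinct $a,b\in\{0,\dots,c-1\}$.
   Context: Fix $\ell\ge1$, loci $V=\{0,\dots,\ell-1\}$, chromosomes $\vec y\in\{0,1\}^V$, fitness $f:\{0,1\}^V\to\mathbb R$ (maximized) with unique global maximizer $g$. An assignment $A$ is a set of pairs $(v,a)$ with at most one pair per locus; coverage $\mathcal C(A)$; $A[v]$ its allele at $v$. $\Psi_A$ is the set of chromosomes agreeing with $A$ on $\mathcal C(A)$ with maximum fitness among such chromosomes; $\Psi_A[v]=\{\psi_v:\psi\in\Psi_A\}$. Epistasis: for $v\in V$ and nonempty $S\subseteq V\setminus\{v\}$, $S\Rightarrow v$ iff for every $s\in S$ there exists an assignment $A$ with $\mathcal C(A)=S$ and $\Psi_A[v]\neq\Psi_{A\setminus\{(s,A[s])\}}[v]$. An epistasis $S\Rightarrow v$ with $|S|\ge2$ is weak if no nonempty proper subset $T\subsetneq S$ has $T\Rightarrow v$. An order-1 epistasis $\{u\}\Rightarrow v$ is strict, written $u\rightarrow v$, if $\Psi_{\{(u,1-g[u])\}}[v]=\{1-g[v]\}$. The epistatic graph is the directed graph on $V$ with edge $u\to v$ iff $\{u\}\Rightarrow v$. A clique is a set of vertices $C$ with $a\rightarrow b$ for all distinct $a,b\in C$. *)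

(* Defs.v *)
From mathcomp Require Import all_boot all_order all_algebra.
Set Implicit Arguments. Unset Strict Implicit. Unset Printing Implicit Defensive.
Import Order.TTheory GRing.Theory Num.Theory.
Local Open Scope ring_scope.

(* Loci V = 'I_l ; chromosomes in {0,1}^V encoded as boolean finite functions
   (true = allele 1, false = allele 0). *)
Definition chrom (l : nat) := {ffun 'I_l -> bool}.

(* An assignment: at most one allele per locus; None = locus not covered. *)
Definition assignment (l : nat) := {ffun 'I_l -> option bool}.

Section Epistasis.
Variables (R : realDomainType) (l : nat) (f : chrom l -> R).

Definition coverage (A : assignment l) : {set 'I_l} :=
  [set v | A v != None].

Definition agrees (A : assignment l) (y : chrom l) : bool :=
  [forall v, if A v is Some a then y v == a else true].

Definition Psi (A : assignment l) : {set chrom l} :=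
  [set y | agrees A y && [forall z : chrom l, agrees A z ==> (f z <= f y)]].

Definition Psi_at (A : assignment l) (v : 'I_l) : {set bool} :=
  [set (y : chrom l) v | y in Psi A].

Definition remove_locus (A : assignment l) (s : 'I_l) : assignment l :=
  [ffun w => if w == s then None else A w].

Definition epistasis (S : {set 'I_l}) (v : 'I_l) : Prop :=
  S != set0 /\ v \notin S /\
  forall s, s \in S ->
    exists A : assignment l,
      coverage A = S /\ Psi_at A v != Psi_at (remove_locus A s) v.

Definition weak_epistasis (S : {set 'I_l}) (v : 'I_l) : Prop :=
  epistasis S v /\ (2 <= #|S|)%N /\
  forall T : {set 'I_l}, T != set0 -> T \proper S -> ~ epistasis T v.

Definition single (u : 'I_l) (a : bool) : assignment l :=
  [ffun w => if w == u then Some a else None].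

(* strict order-1 epistasis u -> v, relative to the global maximizer g *)
Definition strict_epi (g : chrom l) (u v : 'I_l) : Prop :=
  epistasis [set u] v /\ Psi_at (single u (~~ g u)) v = [set ~~ g v].

Definition epi_edge (u v : 'I_l) : Prop := epistasis [set u] v.

End Epistasis.

(* Main.v *)
Require Import Defs.
From mathcomp Require Import all_boot all_order all_algebra.
Import Order.TTheory GRing.Theory Num.Theory.
Local Open Scope ring_scope.
Set Implicit Arguments. Unset Strict Implicit.

Section Aux.
Variables (R : realDomainType) (l : nat) (f : chrom l -> R) (g : chrom l).

Lemma agrees_single (y : chrom l) u a : agrees (single u a) y = (y u == a).
Proof.
apply/forallP/eqP.
  by move/(_ u); rewrite ffunE eqxx => /eqP.
by move=> <- v; rewrite ffunE; case: eqP => // ->.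
Qed.

Lemma PsiP A y : y \in Psi f A ->
  agrees A y /\ forall z, agrees A z -> f z <= f y.
Proof.
rewrite inE => /andP [h1 /forallP h2]; split=> // z hz; exact: (implyP (h2 z) hz).
Qed.

Lemma Psi_intro A y : agrees A y -> (forall z, agrees A z -> f z <= f y) ->
  y \in Psi f A.
Proof.
move=> h1 h2; rewrite inE h1 /=; apply/forallP=> z; apply/implyP; exact: h2.
Qed.

Lemma strict_elt u v y : strict_epi f g u v ->
  y \in Psi f (single u (~~ g u)) -> y v = ~~ g v.
Proof.
move=> [_ H] Hy.
have : y v \in Psi_at f (single u (~~ g u)) v by apply/imsetP; exists y.
by rewrite H in_set1 => /eqP.
Qed.

Lemma strict_ne u v : strict_epi f g u v ->
  exists y, y \in Psi f (single u (~~ g u)).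
Proof.
move=> [_ H].
have : ~~ g v \in Psi_at f (single u (~~ g u)) v by rewrite H set11.
by case/imsetP => y Hy _; exists y.
Qed.

End Aux.

Theorem lemma7 (R : realDomainType) (l : nat) (f : chrom l -> R) (g : chrom l)
  (hl : (0 < l)%N)
  (hg : forall y : chrom l, y != g -> f y < f g)
  (hnoweak : forall (S : {set 'I_l}) (v : 'I_l), ~ weak_epistasis f S v)
  (hstrict : forall u v : 'I_l, epistasis f [set u] v -> strict_epi f g u v)
  (c : nat) (cyc : 'I_c -> 'I_l) (hinj : injective cyc)
  (hcyc : forall i : 'I_c, epi_edge f (cyc i) (cyc (ordS i))) :
  forall a b : 'I_c, a != b -> strict_epi f g (cyc a) (cyc b).
Proof.
move=> a b hab.
pose N i := single (cyc i) (~~ g (cyc i)).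
have hs i : strict_epi f g (cyc i) (cyc (ordS i)) := hstrict _ _ (hcyc i).
have step i y z : y \in Psi f (N i) -> z \in Psi f (N (ordS i)) -> f y <= f z.
  move=> hy hz; have [_ hz2] := PsiP hz; apply: hz2.
  by rewrite agrees_single (strict_elt (hs i) hy).
pose p i := odflt g [pick y in Psi f (N i)].
have pP i : p i \in Psi f (N i).
  rewrite /p; case: pickP => [y hy|h0] //=.
  have [y hy] := strict_ne (hs i); by rewrite h0 in hy.
have c0 : (0 < c)%N by apply: leq_ltn_trans (ltn_ord a).
have iterv k (i : 'I_c) : val (iter k (@ordS c) i) = ((i + k) %% c)%N.
  elim: k => [|k IH] /=; first by rewrite addn0 modn_small.
  by rewrite IH addnS -[((i + k) %% c).+1]addn1 -[(i + k).+1]addn1 modnDml.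
have reach (i j : 'I_c) : exists k, iter k (@ordS c) i = j.
  exists (j + (c - i))%N; apply: val_inj; rewrite iterv /=.
  rewrite addnCA subnKC ?(ltnW (ltn_ord i)) //.
  by rewrite -modnDmr modnn addn0 modn_small.
have le_all i j : f (p i) <= f (p j).
  have [k <-] := reach i j.
  elim: k => [|k IH] //=; apply: le_trans IH (step _ _ _ (pP _) (pP _)).
have inall k y : y \in Psi f (N a) -> y \in Psi f (N (iter k (@ordS c) a)).
  move=> hy; elim: k => // k IH /=.
  set i := iter k (@ordS c) a in IH *.
  apply: Psi_intro.
    by rewrite agrees_single (strict_elt (hs i) IH).
  move=> z hz.
  have [_ h1] := PsiP (pP (ordS i)).
  have [_ h2] := PsiP IH.
  have [h3 _] := PsiP (pP i).
  apply: le_trans (h1 z hz) _; apply: le_trans (le_all _ i) (h2 _ h3).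
have key y : y \in Psi f (N a) -> y (cyc b) = ~~ g (cyc b).
  move=> hy; have [k hk] := reach a b.
  have := inall k y hy; rewrite hk => /PsiP [] /[swap] _.
  by rewrite agrees_single => /eqP.
have hPa : Psi_at f (N a) (cyc b) = [set ~~ g (cyc b)].
  apply/setP => x; rewrite in_set1; apply/imsetP/eqP.
    by case=> y hy ->; apply: key.
  move=> ->; exists (p a); [exact: pP | by rewrite (key (p a) (pP a))].
split=> //.
split; first by apply/set0Pn; exists (cyc a); rewrite set11.
split; first by rewrite in_set1; apply/eqP => /hinj /eqP; rewrite eq_sym (negbTE hab).
move=> s; rewrite in_set1 => /eqP ->.
exists (N a); split.
  apply/setP => w; rewrite !inE ffunE; by case: (w == cyc a).
apply/negP => /eqP Heq.
have : g (cyc b) \in Psi_at f (remove_locus (N a) (cyc a)) (cyc b).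
  apply/imsetP; exists g => //.
  apply: Psi_intro.
    apply/forallP => w; rewrite !ffunE; by case: eqP.
  move=> z _; case: (eqVneq z g) => [->//|/hg /ltW //].
rewrite -Heq hPa in_set1; by case: (g (cyc b)).
Qed.
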